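(* Let $Q$ be a Moufang loop. For all $a,x,y\in Q$ and all $i,j\in\mathbb Z$: $$a^{3i}x\cdot a^{3j}y=a^{3(i+j)}T_a^{-i-2j}\big(T_a^{i-j}(x)T_a^{i+2j}(y)\big)=T_a^{2i+j}\big(T_a^{i-j}(x)T_a^{i+2j}(y)\big)a^{3(i+j)},$$ $$a^{3i}x\cdot ya^{3j}=a^{3(i+j)}T_a^{-i-2j}\big(T_a^{i-j}(x)T_a^{i-j}(y)\big)=T_a^{2i+j}\big(T_a^{i-j}(x)T_a^{i-j}(y)\big)a^{3(i+j)},$$ $$xa^{3i}\cdot a^{3j}y=a^{3(i+j)}T_a^{-i-2j}\big(T_a^{-2i-j}(x)T_a^{i+2j}(y)\big)=T_a^{2i+j}\big(T_a^{-2i-j}(x)T_a^{i+2j}(y)\big)a^{3(i+j)},$$ $$xa^{3i}\cdot ya^{3j}=a^{3(i+j)}T_a^{-i-2j}\big(T_a^{-2i-j}(x)T_a^{i-j}(y)\big)=T_a^{2i+j}\big(T_a^{-2i-j}(x)T_a^{i-j}(y)\big)a^{3(i+j)}.$$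
   Context: A loop is Moufang if it satisfies $xy\cdot zx=(x\cdot yz)x$ for all $x,y,z$; Moufang loops are diassociative, so powers $a^k$ are well defined. $T_a=R_a^{-1}L_a$ where $L_a(y)=ay$, $R_a(y)=ya$; thus $T_a(x)=axa^{-1}$, and $T_a^k$ denotes the $k$-th power (inverse for negative $k$) of this permutation. Juxtaposition $uv$ binds tighter than $\cdot$. *)

(* Defs.v *)
From mathcomp Require Import all_boot all_algebra.
Set Implicit Arguments. Unset Strict Implicit. Unset Printing Implicit Defensive.

(* A loop, given equationally: a set with a binary operation, a two-sided
   identity, and left/right divisions (so every equation a*x=b, y*a=b has a
   unique solution). *)
Record loop := Loop {
  lcarrier :> Type;
  lmul : lcarrier -> lcarrier -> lcarrier;
  lone : lcarrier;
  lldiv : lcarrier -> lcarrier -> lcarrier;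
  lrdiv : lcarrier -> lcarrier -> lcarrier;  (* lrdiv b a = b / a *)
  lmul1x : forall x, lmul lone x = x;
  lmulx1 : forall x, lmul x lone = x;
  lldivK : forall a b, lldiv a (lmul a b) = b;
  lmulldiv : forall a b, lmul a (lldiv a b) = b;
  lrdivK : forall a b, lrdiv (lmul b a) a = b;
  lmulrdiv : forall a b, lmul (lrdiv b a) a = b
}.

Definition moufang (Q : loop) : Prop :=
  forall x y z : Q,
    lmul (lmul x y) (lmul z x) = lmul (lmul x (lmul y z)) x.

(* Powers a^k, k : int.  (Moufang loops are diassociative, so any
   bracketing gives the same value.)  a^n = a(a(...(a e))),
   a^{-n} = a^{-1}(...(a^{-1} e)) with a^{-1} = a \ e. *)
Definition linv (Q : loop) (a : Q) : Q := lldiv a (lone Q).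

Definition lpow (Q : loop) (a : Q) (k : int) : Q :=
  match k with
  | Posz n => iter n (lmul a) (lone Q)
  | Negz n => iter n.+1 (lmul (linv a)) (lone Q)
  end.

Definition T (Q : loop) (a x : Q) : Q := lrdiv (lmul a x) a.
Definition Tinv (Q : loop) (a x : Q) : Q := lldiv a (lmul x a).

Definition Tpow (Q : loop) (a : Q) (k : int) (x : Q) : Q :=
  match k with
  | Posz n => iter n (T a) x
  | Negz n => iter n.+1 (Tinv a) x
  end.

(* Main.v *)
Require Import Defs.
From mathcomp Require Import all_boot all_algebra zify.
Import GRing.Theory.
Local Open Scope ring_scope.
Set Implicit Arguments. Unset Strict Implicit.

Section Zit.
Variable X : Type.
Variables f g : X -> X.
Hypothesis fg : forall x, f (g x) = x.
Hypothesis gf : forall x, g (f x) = x.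

Definition zit (k : int) (x : X) : X :=
  match k with Posz n => iter n f x | Negz n => iter n.+1 g x end.

Lemma int_ind2 (P : int -> Prop) : P 0 -> (forall k, P k -> P (k+1)) ->
  (forall k, P k -> P (k-1)) -> forall k, P k.
Proof.
move=> P0 PS PP [n|n].
  elim: n => // n IH. have -> : Posz n.+1 = Posz n + 1 by lia. exact: PS.
elim: n => [|n IH]. have -> : Negz 0 = 0 - 1 by []. exact: PP.
have -> : Negz n.+1 = Negz n - 1 by lia. exact: PP.
Qed.

Lemma zitS k x : zit (k+1) x = f (zit k x).
Proof.
case: k => [n|[|n]].
- by have -> : Posz n + 1 = Posz n.+1 by lia.
- by rewrite /= fg.
- have -> : Negz n.+1 + 1 = Negz n by lia. by rewrite /= fg.
Qed.

Lemma zitP k x : zit (k-1) x = g (zit k x).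
Proof. by rewrite -{2}(subrK 1 k) zitS gf. Qed.

Lemma zit0 x : zit 0 x = x. Proof. by []. Qed.

Lemma zitD m n x : zit (m + n) x = zit m (zit n x).
Proof.
elim/int_ind2: m x => [|m IH|m IH] x; first by rewrite add0r.
  by rewrite -addrA (addrC 1) addrA zitS IH zitS.
by rewrite addrAC zitP IH zitP.
Qed.

Lemma zit_comm (h : X -> X) : (forall x, h (f x) = f (h x)) ->
  forall k x, zit k (h x) = h (zit k x).
Proof.
move=> hf.
have hg : forall x, h (g x) = g (h x).
  by move=> x; rewrite -{2}(fg x) hf gf.
elim/int_ind2 => [|k IH|k IH] x //; first by rewrite !zitS IH hf.
by rewrite !zitP IH hg.
Qed.

End Zit.
Unset Implicit Arguments.

Section Mou.
Variable Q : loop.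
Hypothesis HM : moufang Q.
Local Notation "x ** y" := (lmul x y) (at level 40, left associativity).
Local Notation "1" := (lone Q).
Local Notation inv := (@linv Q).

Lemma mulIl (a x y : Q) : a ** x = a ** y -> x = y.
Proof. by move=> h; rewrite -(lldivK a x) h lldivK. Qed.
Lemma mulIr (a x y : Q) : x ** a = y ** a -> x = y.
Proof. by move=> h; rewrite -(lrdivK a x) h lrdivK. Qed.

Lemma flex (x z : Q) : x ** (z ** x) = (x ** z) ** x.
Proof. by have := HM x 1 z; rewrite lmulx1 lmul1x. Qed.

Lemma mulxV (x : Q) : x ** inv x = 1.
Proof. exact: lmulldiv. Qed.

Lemma LIP1 (x z : Q) : x ** (inv x ** z) = z.
Proof. apply: (mulIr x); have := HM x (inv x) z; rewrite mulxV lmul1x => ->. done. Qed.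
Lemma LIP2 (x z : Q) : inv x ** (x ** z) = z.
Proof. by apply: (mulIl x); rewrite LIP1. Qed.
Lemma mulVx (x : Q) : inv x ** x = 1.
Proof. apply: (mulIl x); by rewrite flex mulxV lmul1x lmulx1. Qed.
Lemma RIP1 (x z : Q) : (z ** inv x) ** x = z.
Proof.
apply: (mulIl x); have := HM x z (inv x); rewrite mulVx lmulx1 -flex => ->. done.
Qed.
Lemma RIP2 (x z : Q) : (z ** x) ** inv x = z.
Proof. by apply: (mulIr x); rewrite RIP1. Qed.
Lemma invM (x y : Q) : inv (x ** y) = inv y ** inv x.
Proof.
have h : inv (x ** y) ** x = inv y by rewrite -{2}(RIP2 y x) LIP2.
by rewrite -h RIP2.
Qed.
Lemma invK (x : Q) : inv (inv x) = x.
Proof. by apply: (mulIl (inv x)); rewrite mulxV mulVx. Qed.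

Lemma A2 (a x y : Q) : a ** (x ** y) = ((a ** x) ** a) ** (inv a ** y).
Proof.
have h := HM a (x ** y) (inv y); rewrite RIP2 in h.
have e : inv a ** y = inv (inv y ** a) by rewrite invM invK.
by rewrite -h e; symmetry; apply: RIP2.
Qed.
Lemma A3 (a x y : Q) : (x ** y) ** a = (x ** inv a) ** ((a ** y) ** a).
Proof.
have h := HM a (inv x) (x ** y); rewrite LIP2 in h.
have e : x ** inv a = inv (a ** inv x) by rewrite invM invK.
by rewrite -h e; symmetry; apply: LIP2.
Qed.
Lemma LMou (a x z : Q) : ((a ** x) ** a) ** z = a ** (x ** (a ** z)).
Proof. by rewrite (A2 a x (a ** z)) (LIP2 a z). Qed.
Lemma RMou (a x y : Q) : x ** ((a ** y) ** a) = ((x ** a) ** y) ** a.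
Proof. by rewrite (A3 a (x ** a) y) (RIP2 a x). Qed.

Definition pw (b : Q) n := iter n (lmul b) 1.
Lemma pw_comm b n : pw b n ** b = b ** pw b n.
Proof.
elim: n => [|n IH] /=; first by rewrite lmul1x lmulx1.
by rewrite -flex IH.
Qed.
Lemma pwL b n x : pw b n ** x = iter n (lmul b) x.
Proof.
suff : pw b n ** x = iter n (lmul b) x /\ pw b n.+1 ** x = iter n.+1 (lmul b) x by case.
elim: n x => [|n IH] x /=; first by rewrite lmul1x lmulx1.
split; first by case: (IH x).
have -> : b ** (b ** pw b n) = (b ** pw b n) ** b by rewrite -[in LHS]pw_comm flex.
by rewrite LMou (proj1 (IH _)) -iterSr.
Qed.
Lemma pwR b n x : x ** pw b n = iter n (fun z => z ** b) x.
Proof.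
suff : x ** pw b n = iter n (fun z => z ** b) x /\
       x ** pw b n.+1 = iter n.+1 (fun z => z ** b) x by case.
elim: n x => [|n IH] x /=; first by rewrite !lmulx1.
split; first by case: (IH x).
have -> : b ** (b ** pw b n) = (b ** pw b n) ** b by rewrite -[in LHS]pw_comm flex.
by rewrite RMou (proj1 (IH _)) -iterSr.
Qed.

End Mou.

Section Pow.
Variable Q : loop.
Hypothesis HM : moufang Q.
Variable a : Q.
Local Notation "x ** y" := (lmul x y) (at level 40, left associativity).
Local Notation inv := (@linv Q).
Local Notation ai := (inv a).

Definition zL := zit (lmul a) (lmul ai).
Definition zR := zit (fun z => z ** a) (fun z => z ** ai).
Definition N p q (x : Q) := zL p (zR q x).

Lemma L1 x : a ** (ai ** x) = x. Proof. exact: LIP1. Qed.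
Lemma L2 x : ai ** (a ** x) = x. Proof. exact: LIP2. Qed.
Lemma R1 x : (x ** ai) ** a = x. Proof. exact: RIP1. Qed.
Lemma R2 x : (x ** a) ** ai = x. Proof. exact: RIP2. Qed.

Lemma zLS k x : zL (k+1) x = a ** zL k x. Proof. exact: (zitS L1). Qed.
Lemma zLP k x : zL (k-1) x = ai ** zL k x. Proof. exact: (zitP L1 L2). Qed.
Lemma zRS k x : zR (k+1) x = zR k x ** a. Proof. exact: (zitS R1). Qed.
Lemma zRP k x : zR (k-1) x = zR k x ** ai. Proof. exact: (zitP R1 R2). Qed.
Lemma zLD m n x : zL (m+n) x = zL m (zL n x). Proof. exact: (zitD L1 L2). Qed.
Lemma zRD m n x : zR (m+n) x = zR m (zR n x). Proof. exact: (zitD R1 R2). Qed.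

Lemma zR_L k x : zR k (a ** x) = a ** zR k x.
Proof. apply: (zit_comm R1 R2) => y; exact: flex. Qed.
Lemma zL_R k x : zL k (x ** a) = zL k x ** a.
Proof. rewrite /zL; apply: (zit_comm L1 L2 (h:=fun z => z ** a)) => y; symmetry; exact: flex. Qed.
Lemma NC k l x : zL k (zR l x) = zR l (zL k x).
Proof. rewrite /zL; apply: (zit_comm L1 L2 (h:=zR l)) => y; exact: zR_L. Qed.

Lemma NN p q r s x : N p q (N r s x) = N (p+r) (q+s) x.
Proof. by rewrite /N NC zRD -NC zLD -NC. Qed.
Lemma NL p q x : a ** N p q x = N (p+1) q x.
Proof. by rewrite /N zLS. Qed.
Lemma NLi p q x : ai ** N p q x = N (p-1) q x.
Proof. by rewrite /N zLP. Qed.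
Lemma NR p q x : N p q x ** a = N p (q+1) x.
Proof. by rewrite /N -zL_R zRS. Qed.
Lemma NRi p q x : N p q x ** ai = N p (q-1) x.
Proof. by apply: (@mulIr Q a); rewrite R1 NR subrK. Qed.

Lemma TE x : T a x = (a ** x) ** ai.
Proof. by rewrite /T -{1}(@RIP1 _ HM a (a ** x)) lrdivK. Qed.
Lemma TiE x : Tinv a x = ai ** (x ** a).
Proof. by rewrite /Tinv -{1}(@LIP1 _ HM a (x ** a)) lldivK. Qed.

Lemma TpowN k x : Tpow a k x = N k (-k) x.
Proof.
have e : forall k x, Tpow a k x = zit (T a) (Tinv a) k x by case.
have c1 : forall x, T a (Tinv a x) = x by move=> y; rewrite TE TiE L1 R2.
have c2 : forall x, Tinv a (T a x) = x by move=> y; rewrite TE TiE R1 L2.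
rewrite e; elim/int_ind2: k x => [|k IH|k IH] x //.
  by rewrite (zitS c1) IH TE NL NRi opprD.
rewrite (zitP c1 c2) IH TiE NR NLi; congr (N _ _ _); lia.
Qed.

Lemma AP2 n u v : zL n (u ** v) = N n n u ** zL (-n) v.
Proof.
elim/int_ind2: n u v => [|n IH|n IH] u v //.
  by rewrite zLS IH (@A2 _ HM) NL NR -zLP opprD.
rewrite zLP IH (@A2 _ HM) (@invK _ HM) NLi NRi -zLS. congr (_ ** _); congr (zit _ _ _ _); lia.
Qed.

Lemma AP3 n u v : zR n (u ** v) = zR (-n) u ** N n n v.
Proof.
elim/int_ind2: n u v => [|n IH|n IH] u v //.
  by rewrite zRS IH (@A3 _ HM) NL NR -zRP opprD.
rewrite zRP IH (@A3 _ HM) (@invK _ HM) NLi NRi -zRS. congr (_ ** _); congr (zit _ _ _ _); lia.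
Qed.

Lemma Nmul p q u v : N p q (u ** v) = N p p (N 0 (-q) u) ** N (-p) 0 (N q q v).
Proof. by rewrite {1}/N AP3 AP2. Qed.

Lemma powL k x : lpow a k ** x = N k 0 x.
Proof. case: k => n; [exact: pwL | exact: (@pwL _ HM ai n.+1)]. Qed.
Lemma powR k x : x ** lpow a k = N 0 k x.
Proof. case: k => n; [exact: pwR | exact: (@pwR _ HM ai n.+1)]. Qed.

End Pow.

Theorem mainTheorem10 (Q : loop) (HM : moufang Q) (a x y : Q) (i j : int) :
  let m := @lmul Q in
  let p := @lpow Q a in
  let Ta := @Tpow Q a in
  (* a^{3i}x . a^{3j}y *)
  (m (m (p (3 * i)) x) (m (p (3 * j)) y)
     = m (p (3 * (i + j))) (Ta (- i - 2 * j) (m (Ta (i - j) x) (Ta (i + 2 * j) y)))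
   /\ m (p (3 * (i + j))) (Ta (- i - 2 * j) (m (Ta (i - j) x) (Ta (i + 2 * j) y)))
     = m (Ta (2 * i + j) (m (Ta (i - j) x) (Ta (i + 2 * j) y))) (p (3 * (i + j))))
  (* a^{3i}x . y a^{3j} *)
  /\ (m (m (p (3 * i)) x) (m y (p (3 * j)))
     = m (p (3 * (i + j))) (Ta (- i - 2 * j) (m (Ta (i - j) x) (Ta (i - j) y)))
   /\ m (p (3 * (i + j))) (Ta (- i - 2 * j) (m (Ta (i - j) x) (Ta (i - j) y)))
     = m (Ta (2 * i + j) (m (Ta (i - j) x) (Ta (i - j) y))) (p (3 * (i + j))))
  (* x a^{3i} . a^{3j} y *)
  /\ (m (m x (p (3 * i))) (m (p (3 * j)) y)
     = m (p (3 * (i + j))) (Ta (- i - 2 * j) (m (Ta (- 2 * i - j) x) (Ta (i + 2 * j) y)))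
   /\ m (p (3 * (i + j))) (Ta (- i - 2 * j) (m (Ta (- 2 * i - j) x) (Ta (i + 2 * j) y)))
     = m (Ta (2 * i + j) (m (Ta (- 2 * i - j) x) (Ta (i + 2 * j) y))) (p (3 * (i + j))))
  (* x a^{3i} . y a^{3j} *)
  /\ (m (m x (p (3 * i))) (m y (p (3 * j)))
     = m (p (3 * (i + j))) (Ta (- i - 2 * j) (m (Ta (- 2 * i - j) x) (Ta (i - j) y)))
   /\ m (p (3 * (i + j))) (Ta (- i - 2 * j) (m (Ta (- 2 * i - j) x) (Ta (i - j) y)))
     = m (Ta (2 * i + j) (m (Ta (- 2 * i - j) x) (Ta (i - j) y))) (p (3 * (i + j)))).
Proof.
move=> m p Ta; rewrite {}/m {}/p {}/Ta.
rewrite !(@TpowN _ HM) !(@powL _ HM) !(@powR _ HM) !(@NN _ HM) !(@Nmul _ HM) !(@NN _ HM).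
by repeat split; congr (lmul (N _ _ _ _ _) (N _ _ _ _ _)); lia.
Qed.
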